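(* Let $\Phi=P.\phi$ be a DQBF with prefix $P=\forall x_1,\dots,x_n\,\exists y_1(D_1),\dots,y_k(D_k)$. If $G_{\mathrm{syn}}$ is a syntactic symmetry group for $\Phi$, then the associated group $G_{\mathrm{sem}}$ of $G_{\mathrm{syn}}$ is a semantic symmetry group for $\Phi$ (in particular, it is a group under composition).
   Context: $X=\{x_1,\dots,x_n\}$, $Y=\{y_1,\dots,y_k\}$ are finite disjoint sets of propositional variables; $\operatorname{BF}(V)$ the propositional formulas over $V\subseteq X\cup Y$; $\mathcal A(V)$ the assignments $V\to\{\top,\bot\}$; $[\phi]_\sigma$ the truth value; $\phi\in\operatorname{BF}(X\cup Y)$; $D_j\subseteq X$. An interpretation is $s=(s_1,\dots,s_k)$ with $s_j:\{\top,\bot\}^{|D_j|}\to\{\top,\bot\}$; $\mathcal S(P)$ the set of interpretations. For $\sigma\in\mathcal A(X)$, $\sigma_s\in\mathcal A(X\cup Y)$ equals $\sigma$ on $X$ and $\sigma_s(y_j)=s_j$ evaluated at $\sigma$'s values on $D_j$. $[P.\phi]_s=\bigwedge_{\sigma\in\mathcal A(X)}[\phi]_{\sigma_s}$. For $g:\operatorname{BF}(V)\to\operatorname{BF}(V)$ and $\rho\in\mathcal A(V)$, $g(\rho)(v)=[g(v)]_\rho$; $g$ preserves propositional satisfiability if $[g(\phi)]_\rho=[\phi]_{g(\rho)}$ always. A formula in $\operatorname{BF}(Y)$ depends on $x_i$ if it contains some $y_j$ with $x_i\in D_j$. A bijection $g$ of $\operatorname{BF}(X\cup Y)$ is admissible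 w.r.t. $P$ if it preserves propositional satisfiability, $g(x_i)\in\operatorname{BF}(X)$, $g(y_j)\in\operatorname{BF}(Y)$, and if $g(y_j)$ depends on $x_i$ then $g^{-1}(x_i)\in\operatorname{BF}(D_j)$. An admissible group is a subgroup of all admissible functions. For admissible $g$ and $\sigma\in\mathcal A(X)$, $g(\sigma)(x)=[g(x)]_\sigma$. A syntactic symmetry group for $P.\phi$ is an admissible group $G$ with $[P.\phi]_s=[P.g(\phi)]_s$ for all $g\in G$, $s\in\mathcal S(P)$. The associated group of $G_{\mathrm{syn}}$ is the set of all bijections $f:\mathcal S(P)\to\mathcal S(P)$ such that for every $s\in\mathcal S(P)$ and $\sigma\in\mathcal A(X)$ there exists $g\in G_{\mathrm{syn}}$ with $g(\sigma)_{f(s)}=g(\sigma_s)$. A semantic symmetry group for $P.\phi$ is a group $G$ of bijections of $\mathcal S(P)$ with $[P.\phi]_s=[P.\phi]_{f(s)}$ for all $f\in G$, $s\in\mathcal S(P)$. *)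

(* Defs.v *)
From mathcomp Require Import all_boot.
Set Implicit Arguments. Unset Strict Implicit. Unset Printing Implicit Defensive.

Inductive form (V : Type) : Type :=
| FTop | FBot | FVar of V | FNot of form V
| FAnd of form V & form V | FOr of form V & form V
| FImp of form V & form V | FIff of form V & form V.
Arguments FTop {V}. Arguments FBot {V}.

Fixpoint eval (V : Type) (r : V -> bool) (f : form V) : bool :=
  match f with
  | FTop => true | FBot => false | FVar v => r v
  | FNot a => ~~ eval r a
  | FAnd a b => eval r a && eval r b
  | FOr a b => eval r a || eval r b
  | FImp a b => eval r a ==> eval r b
  | FIff a b => eval r a == eval r b
  end.

(* [over P f]: all variables of f satisfy P, i.e. f is in BF({v | P v}). *)
Fixpoint over (V : Type) (P : pred V) (f : form V) : bool :=
  match f with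
  | FTop | FBot => true | FVar v => P v
  | FNot a => over P a
  | FAnd a b | FOr a b | FImp a b | FIff a b => over P a && over P b
  end.

Fixpoint has_var (V : Type) (P : pred V) (f : form V) : bool :=
  match f with
  | FTop | FBot => false | FVar v => P v
  | FNot a => has_var P a
  | FAnd a b | FOr a b | FImp a b | FIff a b => has_var P a || has_var P b
  end.

(* Variables X = {x_0..x_{n-1}} (inl) and Y = {y_0..y_{k-1}} (inr). *)
Definition var (n k : nat) := ('I_n + 'I_k)%type.

Definition isX n k : pred (var n k) := fun v => if v is inl _ then true else false.
Definition isY n k : pred (var n k) := fun v => if v is inr _ then true else false.
Definition inD n k (D : 'I_k -> {set 'I_n}) (j : 'I_k) : pred (var n k) :=
  fun v => if v is inl i then i \in D j else false.

Definition dom n (Dj : {set 'I_n}) := {ffun {x : 'I_n | x \in Dj} -> bool}.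

Definition interp n k (D : 'I_k -> {set 'I_n}) :=
  forall j : 'I_k, {ffun dom (D j) -> bool}.

Definition restrict n (sigma : 'I_n -> bool) (Dj : {set 'I_n}) : dom Dj :=
  [ffun x => sigma (val x)].

Definition ext n k (D : 'I_k -> {set 'I_n}) (sigma : 'I_n -> bool) (s : interp D)
  : var n k -> bool :=
  fun v => match v with inl i => sigma i | inr j => s j (restrict sigma (D j)) end.

Definition qsat n k (D : 'I_k -> {set 'I_n}) (phi : form (var n k)) (s : interp D) : bool :=
  [forall sigma : {ffun 'I_n -> bool}, eval (ext sigma s) phi].

Definition act V (g : form V -> form V) (rho : V -> bool) : V -> bool :=
  fun v => eval rho (g (FVar v)).

Definition preserves_sat V (g : form V -> form V) : Prop :=
  forall (phi : form V) (rho : V -> bool), eval rho (g phi) = eval (act g rho) phi.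

Definition depends n k (D : 'I_k -> {set 'I_n}) (psi : form (var n k)) (i : 'I_n) : bool :=
  has_var (fun v : var n k => if v is inr l then i \in D l else false) psi.

Definition admissible n k (D : 'I_k -> {set 'I_n}) (g : form (var n k) -> form (var n k))
  : Prop :=
  [/\ bijective g,
      preserves_sat g,
      (forall i : 'I_n, over (@isX n k) (g (FVar (inl i)))),
      (forall j : 'I_k, over (@isY n k) (g (FVar (inr j)))) &
      (forall (j : 'I_k) (i : 'I_n), depends D (g (FVar (inr j))) i ->
         forall phi, g phi = FVar (inl i) -> over (inD D j) phi)].

Definition is_group T (G : (T -> T) -> Prop) : Prop :=
  [/\ G (fun x => x),
      (forall f h, G f -> G h -> G (fun x => f (h x))) &
      (forall f, G f -> exists h, [/\ G h, cancel f h & cancel h f])].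

Definition admissible_group n k (D : 'I_k -> {set 'I_n})
  (G : (form (var n k) -> form (var n k)) -> Prop) : Prop :=
  is_group G /\ (forall g, G g -> admissible D g).

Definition syntactic_symmetry_group n k (D : 'I_k -> {set 'I_n}) (phi : form (var n k))
  (G : (form (var n k) -> form (var n k)) -> Prop) : Prop :=
  admissible_group D G /\
  (forall g (s : interp D), G g -> qsat phi s = qsat (g phi) s).

(* g(sigma)(x) = [g(x)]_sigma, for sigma in A(X) (g(x) is in BF(X)). *)
Definition actX n k (g : form (var n k) -> form (var n k)) (sigma : {ffun 'I_n -> bool})
  : {ffun 'I_n -> bool} :=
  [ffun i => eval (fun v : var n k => if v is inl i' then sigma i' else false)
                  (g (FVar (inl i)))].

Definition associated_group n k (D : 'I_k -> {set 'I_n})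
  (G : (form (var n k) -> form (var n k)) -> Prop) : (interp D -> interp D) -> Prop :=
  fun f => bijective f /\
    forall (s : interp D) (sigma : {ffun 'I_n -> bool}),
      exists g, G g /\ ext (actX g sigma) (f s) =1 act g (ext sigma s).

Definition semantic_symmetry_group n k (D : 'I_k -> {set 'I_n}) (phi : form (var n k))
  (G : (interp D -> interp D) -> Prop) : Prop :=
  [/\ is_group G,
      (forall f, G f -> bijective f) &
      (forall f (s : interp D), G f -> qsat phi s = qsat phi (f s))].

(* Main.v *)
Require Import Defs.
From mathcomp Require Import all_boot.
From Stdlib Require Import FunctionalExtensionality.
Set Implicit Arguments. Unset Strict Implicit. Unset Printing Implicit Defensive.

Lemma eval_agree (V : eqType) (r1 r2 : V -> bool) (f : form V) :
  (forall v, has_var (pred1 v) f -> r1 v = r2 v) -> eval r1 f = eval r2 f.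
Proof.
elim: f => //= [v|a IHa|a IHa b IHb|a IHa b IHb|a IHa b IHb|a IHa b IHb] H.
- by apply: H; rewrite /= eqxx.
- by rewrite IHa.
all: by rewrite IHa ?IHb // => v hv; apply: H; rewrite hv ?orbT.
Qed.

Lemma over_has (V : eqType) (P0 : pred V) (f : form V) (v : V) :
  Defs.over P0 f -> has_var (pred1 v) f -> P0 v.
Proof.
elim: f => //=.
- by move=> w Pw /eqP <-.
- by move=> a IHa b IHb /andP[oa ob] /orP[/(IHa oa)|/(IHb ob)].
- by move=> a IHa b IHb /andP[oa ob] /orP[/(IHa oa)|/(IHb ob)].
- by move=> a IHa b IHb /andP[oa ob] /orP[/(IHa oa)|/(IHb ob)].
- by move=> a IHa b IHb /andP[oa ob] /orP[/(IHa oa)|/(IHb ob)].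
Qed.

Lemma has_mono (V : Type) (P Q : pred V) (f : form V) :
  (forall v, P v -> Q v) -> has_var P f -> has_var Q f.
Proof.
move=> PQ; elim: f => //=.
all: by move=> a IHa b IHb /orP[/IHa ->|/IHb ->] //; rewrite orbT.
Qed.

Lemma eval_eq (V : eqType) (r1 r2 : V -> bool) (f : form V) :
  r1 =1 r2 -> eval r1 f = eval r2 f.
Proof. by move=> e; apply: eval_agree => v _; apply: e. Qed.

Lemma ext_eq n k (D : 'I_k -> {set 'I_n}) (s1 : 'I_n -> bool) s2 (s : interp D) :
  s1 =1 s2 -> ext s1 s =1 ext s2 s.
Proof.
move=> e [i|j] /=; first exact: e.
by congr (s j _); apply/ffunP => x; rewrite !ffunE.
Qed.

Lemma orbit_lemma (T : Type) (F : finType) (enc : T -> F) (f h : T -> T) :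
  injective enc -> cancel f h -> cancel h f -> forall s, exists N, h s = iter N f s.
Proof.
move=> ienc fK hK s.
pose u := fun i : 'I_(#|F|.+1) => enc (iter i f s).
have : ~~ injectiveb u.
  apply/negP => /injectiveP iu; have := leq_card u iu; by rewrite card_ord ltnn.
case/injectivePn => i [j] nij /ienc eij.
have iterI : forall m a b, iter m f a = iter m f b -> a = b.
  elim=> [|m IH] a b //= e; apply: IH; by rewrite -[iter m f a]fK e fK.
wlog lij : i j nij eij / i < j.
  move=> W; case: (ltngtP i j) => [l|l|/val_inj e]; first exact: (W i j).
  - by apply: (W j i) => //; rewrite eq_sym.
  - by rewrite e eqxx in nij.
have e : iter (j - i) f s = s.
  apply: (iterI i); rewrite -iterD subnKC ?(ltnW lij) // eij.
move: e; case E: (j - i) => [|N]; first by move: lij; rewrite -subn_gt0 E.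
by move=> e; exists N; rewrite -{1}e /= fK.
Qed.

Definition allowed n k (D : 'I_k -> {set 'I_n})
  (G : (form (var n k) -> form (var n k)) -> Prop) (s s' : interp D) : Prop :=
  forall sigma : {ffun 'I_n -> bool},
    exists g, G g /\ ext (actX g sigma) s' =1 act g (ext sigma s).

Lemma act_comp V (g1 g2 : form V -> form V) rho :
  preserves_sat g1 -> act (fun x => g1 (g2 x)) rho =1 act g2 (act g1 rho).
Proof. by move=> P v; rewrite /act P. Qed.

Lemma allowed_refl n k (D : 'I_k -> {set 'I_n}) G (s : interp D) :
  is_group G -> allowed G s s.
Proof.
case=> G1 _ _ sigma; exists (fun x => x); split => // v.
have E : actX (fun x : form (var n k) => x) sigma =1 sigma by move=> i; rewrite /actX ffunE.
by rewrite /act /=; apply: ext_eq.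
Qed.

Lemma allowed_trans n k (D : 'I_k -> {set 'I_n}) G (s s1 s2 : interp D) :
  is_group G -> (forall g, G g -> admissible D g) ->
  allowed G s s1 -> allowed G s1 s2 -> allowed G s s2.
Proof.
case=> _ Gc _ Gadm A1 A2 sigma.
have [g1 [G1 E1]] := A1 sigma.
have [g2 [G2 E2]] := A2 (actX g1 sigma).
have [_ P1 _ _ _] := Gadm _ G1.
have [_ P2 X2 _ _] := Gadm _ G2.
exists (fun x => g1 (g2 x)); split; first exact: Gc.
move=> v; rewrite act_comp //.
transitivity (act g2 (ext (actX g1 sigma) s1) v); last first.
  by rewrite /act; apply: eval_eq => w; rewrite E1.
rewrite -E2; apply: ext_eq => i; rewrite /actX !ffunE P1; apply: eval_agree => w hw.
have := over_has (X2 i) hw; case: w hw => [i'|j'] //= _ _.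
by rewrite /act ffunE.
Qed.

Lemma key n k (D : 'I_k -> {set 'I_n}) phi G (s s' : interp D) :
  syntactic_symmetry_group D phi G -> allowed G s s' -> qsat phi s' -> qsat phi s.
Proof.
case=> [[[G1 Gc Ginv] Gadm] Hsym] A Hs'.
apply/forallP => sigma.
have [g [Gg Eg]] := A sigma.
have [h [Gh gK hK]] := Ginv g Gg.
have [_ Pg Xg Yg _] := Gadm g Gg.
have [_ Ph Xh Yh Dh] := Gadm h Gh.
pose sigd (j : 'I_k) (d : dom (D j)) : {ffun 'I_n -> bool} :=
  [ffun i => if (insub i : option {x : 'I_n | x \in D j}) is Some x then d x else false].
pose t : interp D := fun j =>
  [ffun d => eval (ext (actX g (sigd j d)) s') (h (FVar (inr j)))].
have T1 : forall (sg : {ffun 'I_n -> bool}) j,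
    t j (restrict sg (D j)) = eval (ext (actX g sg) s') (h (FVar (inr j))).
  move=> sg j; rewrite /t ffunE; apply: eval_agree => w hw.
  have := over_has (Yh j) hw; case: w hw => [i|l] //= hw _.
  congr (s' l _); apply/ffunP => x; rewrite /restrict !ffunE.
  have dep : depends D (h (FVar (inr j))) (val x).
    by apply: has_mono hw => w /eqP ->; exact: valP x.
  have O := Dh j (val x) dep (g (FVar (inl (val x)))) (gK _).
  apply: eval_agree => w hw2; have := over_has O hw2; case: w hw2 => [i'|//] _ /= Hi'.
  by rewrite ffunE (insubT (fun x => x \in D j) Hi') /= ffunE.
have T2 : forall sg : {ffun 'I_n -> bool}, act g (ext sg t) =1 ext (actX g sg) s'.
  move=> sg [i|j].
  - rewrite /act /= /actX ffunE; apply: eval_agree => w hw.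
    by have := over_has (Xg i) hw; case: w hw.
  - rewrite /act /=.
    transitivity (eval (act h (ext (actX g sg) s')) (g (FVar (inr j)))).
      apply: eval_agree => w hw; have := over_has (Yg j) hw.
      by case: w hw => [//|l] _ _ /=; rewrite T1.
    by rewrite -Ph gK.
have Qt : qsat phi t.
  rewrite (Hsym g t Gg); apply/forallP => sg; rewrite Pg (eval_eq _ (T2 sg)).
  exact: (forallP Hs').
have E : ext sigma t =1 ext sigma s.
  case=> [i|j] //=; rewrite T1 (eval_eq _ Eg) -Pg hK //.
by rewrite -(eval_eq _ E); exact: (forallP Qt).
Qed.

Lemma allowed_iter n k (D : 'I_k -> {set 'I_n}) G (f : interp D -> interp D) :
  is_group G -> (forall g, G g -> admissible D g) ->
  (forall s, allowed G s (f s)) -> forall N s, allowed G s (iter N f s).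
Proof.
move=> IG Ga Af; elim=> [|N IH] s /=; first exact: allowed_refl.
exact: allowed_trans (IH s) (Af _).
Qed.

Lemma allowed_inv n k (D : 'I_k -> {set 'I_n}) G (f h : interp D -> interp D) :
  is_group G -> (forall g, G g -> admissible D g) -> cancel f h -> cancel h f ->
  (forall s, allowed G s (f s)) -> forall s, allowed G s (h s).
Proof.
move=> IG Ga fK hK Af s.
pose F := {dffun forall j : 'I_k, {ffun dom (D j) -> bool}}.
pose enc (x : interp D) : F := finfun x.
have ienc : injective enc.
  move=> x y e; apply: functional_extensionality_dep => j.
  by have := congr1 (fun z : F => z j) e; rewrite /= !ffunE.
have [N ->] := orbit_lemma ienc fK hK s.
exact: allowed_iter.
Qed.

Theorem lemma5 (n k : nat) (D : 'I_k -> {set 'I_n}) (phi : form (var n k))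
  (Gsyn : (form (var n k) -> form (var n k)) -> Prop) :
  @syntactic_symmetry_group n k D phi Gsyn ->
  @semantic_symmetry_group n k D phi (@associated_group n k D Gsyn).
Proof.
move=> Hsyn; have Hsyn' := Hsyn; case: Hsyn => [[IG Gadm] Hsym].
split.
- split.
  + split; first by exists id.
    by move=> s; apply: allowed_refl.
  + move=> f1 f2 [b1 A1] [b2 A2]; split; first exact: bij_comp.
    by move=> s; apply: allowed_trans (A2 s) (A1 (f2 s)).
  + move=> f [[h fK hK] Af]; exists h; split=> //; split; first exact: (Bijective hK fK).
    exact: (allowed_inv IG Gadm fK hK Af).
- by move=> f [].
- move=> f s [[h fK hK] Af]; apply/idP/idP => H.
  + have Ah := allowed_inv IG Gadm fK hK Af.
    by apply: (key Hsyn' (Ah (f s))); rewrite fK.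
  + exact: key Hsyn' (Af s) H.
Qed.
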